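(* For all $a,b,c,d\in\mathbb Z$: $a:b::_{SY}c:d$ if and only if $a:b::_m c:d$ holds in $(\mathbb Z,+,\mathbb Z)$.
   Context: $a:b::_{SY}c:d$ means: there exist $k,\ell,o,u\in\mathbb Z$ with $a=k+o$, $b=\ell+o$, $c=k+u$, $d=\ell+u$. $(\mathbb Z,+,\mathbb Z)$ is the algebra with universe $\mathbb Z$, addition, and every integer as a constant. A justification is a pair of terms $s\to t$ with the variables of $t$ among those of $s$; monolinear justifications are those where $s,t$ contain only one fixed variable $x$, occurring at most once in $s$ and at most once in $t$. $\uparrow^m(a\to b)$ is the set of monolinear justifications $s\to t$ with $a=s(\mathbf o)$, $b=t(\mathbf o)$ for some value $\mathbf o$; $\uparrow^m(a\to b:\!\cdot\,c\to d):=\uparrow^m(a\to b)\cap\uparrow^m(c\to d)$. A monolinear justification is trivial if it lies in all sets $\uparrow^m(a'\to b':\!\cdot\,c'\to d')$. $a\to b:\!\cdot_m\,c\to d$ holds iff either (i) all justifications in $\uparrow^m(a\to b)\cup\uparrow^m(c\to d)$ are trivial, or (ii) $J_d:=\uparrow^m(a\to b:\!\cdot\,c\to d)$ contains a non-trivial justification and for every $d'$, $J_d\subseteq J_{d'}$ implies $J_{d'}$ contains a non-trivial justification and $J_{d'}\subseteq J_d$ (ignoring trivial justifications). $a:b::_m c:d$ iff $a\to b:\!\cdot_m\,c\to d$, $b\to a:\!\cdot_m\,d\to c$, $c\to d:\!\cdot_m\,a\to b$, $d\to c:\!\cdot_m\,b\to a$ all hold. *)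

(* Defs.v *)
From Stdlib Require Import ZArith Lia.
Open Scope Z_scope.

(** Terms of the algebra (Z, +, Z) over the single fixed variable x:
    the variable, an integer constant, or a sum of two terms. *)
Inductive term : Type :=
| TX : term
| TC : Z -> term
| TP : term -> term -> term.

Fixpoint eval (s : term) (o : Z) : Z :=
  match s with
  | TX => o
  | TC z => z
  | TP s1 s2 => eval s1 o + eval s2 o
  end.

Fixpoint occ (s : term) : nat :=
  match s with
  | TX => 1%nat
  | TC _ => 0%nat
  | TP s1 s2 => (occ s1 + occ s2)%nat
  end.

(** A justification is a pair s -> t; monolinear: x occurs at most once in s,
    at most once in t, and the variables of t are among those of s. *)
Definition justification := (term * term)%type.

Definition monolinear (j : justification) : Prop :=
  (occ (fst j) <= 1)%nat /\ (occ (snd j) <= 1)%nat /\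
  ((0 < occ (snd j))%nat -> (0 < occ (fst j))%nat).

Definition upm (a b : Z) (j : justification) : Prop :=
  monolinear j /\ exists o : Z, eval (fst j) o = a /\ eval (snd j) o = b.

Definition upm2 (a b c d : Z) (j : justification) : Prop :=
  upm a b j /\ upm c d j.

Definition trivialJ (j : justification) : Prop :=
  monolinear j /\ forall a' b' c' d' : Z, upm2 a' b' c' d' j.

Definition arrow_m (a b c d : Z) : Prop :=
  (forall j, (upm a b j \/ upm c d j) -> trivialJ j)
  \/
  ((exists j, upm2 a b c d j /\ ~ trivialJ j) /\
   forall d' : Z,
     (forall j, upm2 a b c d j /\ ~ trivialJ j -> upm2 a b c d' j /\ ~ trivialJ j) ->
     (exists j, upm2 a b c d' j /\ ~ trivialJ j) /\
     (forall j, upm2 a b c d' j /\ ~ trivialJ j -> upm2 a b c d j /\ ~ trivialJ j)).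

Definition prop_m (a b c d : Z) : Prop :=
  arrow_m a b c d /\ arrow_m b a d c /\ arrow_m c d a b /\ arrow_m d c b a.

Definition prop_SY (a b c d : Z) : Prop :=
  exists k l o u : Z, a = k + o /\ b = l + o /\ c = k + u /\ d = l + u.

(* Main.v *)
Require Import Defs.
From Stdlib Require Import ZArith Lia.
Open Scope Z_scope.

Lemma eval_lin : forall s o, eval s o = Z.of_nat (occ s) * o + eval s 0.
Proof.
  induction s as [| z | s1 IHs1 s2 IHs2]; intros o; cbn [eval occ]; rewrite ?Nat2Z.inj_add; try lia.
  rewrite IHs1, IHs2, (IHs1 0), (IHs2 0). lia.
Qed.

Lemma arrow_of : forall a b c d, a - b = c - d -> arrow_m a b c d.
Proof.
  intros a b c d H. right.
  set (j := (TX, TP TX (TC (b - a)))).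
  assert (Hm : monolinear j) by (unfold monolinear, j; simpl; lia).
  assert (Hj : upm2 a b c d j /\ ~ trivialJ j).
  { split. split; split; auto.
    - exists a; simpl; split; lia.
    - exists c; simpl; split; lia.
    - intros [_ T]. destruct (T 0 (b - a + 1) 0 0) as [[_ [o [H1 H2]]] _].
      simpl in *. lia. }
  split. exists j; exact Hj.
  intros d' Hsub. destruct (Hsub j Hj) as [[_ [_ [o [H1 H2]]]] _].
  simpl in *. assert (E : d' = d) by lia. rewrite E. split; [exists j; exact Hj| auto].
Qed.

Lemma arrow_to : forall a b c d, arrow_m a b c d -> b = d \/ a - b = c - d.
Proof.
  intros a b c d [H | [[j [[[Hm [o [H1 H2]]] [_ [o' [H3 H4]]]] _]] _]].
  - exfalso. destruct (H (TC a, TC b)) as [_ T].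
    + left. split. unfold monolinear; simpl; lia. exists 0; simpl; auto.
    + destruct (T (a + 1) b 0 0) as [[_ [o [H1 H2]]] _]. simpl in H1. lia.
  - destruct j as [s t]. unfold monolinear in Hm. simpl in *.
    rewrite eval_lin in H1, H2, H3, H4.
    destruct (occ t) as [|[|n]] eqn:Et; [left; lia| |lia].
    right. destruct (occ s) as [|[|n]] eqn:Es; lia.
Qed.

Theorem mainTheorem7 : forall a b c d : Z, prop_SY a b c d <-> prop_m a b c d.
Proof.
  intros a b c d. split.
  - intros [k [l [o [u [Ha [Hb [Hc Hd]]]]]]].
    repeat split; apply arrow_of; lia.
  - intros [A1 [A2 _]]. apply arrow_to in A1. apply arrow_to in A2.
    exists a, b, 0, (c - a). lia.
Qed.
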